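(* Let $n\ge1$ and suppose that for every $0\le k<n$, $\mathbb{Z}_k$ is a $1$-Gray code for $\mathcal{Z}_k$ with $\mathrm{first}(\mathbb{Z}_k)=0(001)^\star$ and $\mathrm{last}(\mathbb{Z}_k)=(001)^\star$ (where $\mathbb{Z}_0=(\epsilon)$). Let $i,j$ be integers with $1\le j<i\le n$. Then: (i) if $3\le i+j<n$, the list $\mathbb{L}=0^i1^j\cdot\mathbb{Z}_{n-i-j}$ is a $1$-Gray code for $0^i1^j\cdot\mathcal{Z}_{n-i-j}$ with $\mathrm{first}(\mathbb{L})=0^i1^j0(001)^\star$ and $\mathrm{last}(\mathbb{L})=0^i1^j(001)^\star$; when $i+j=n$ the list $\mathbb{L}$ contains only the word $0^i1^j$; (ii) if $3\le i+j<n-1$, the list $\mathbb{L}=0^i1^{j+1}\cdot\mathbb{Z}_{n-i-j-1}\circ0^i1^j\cdot\mathbb{Z}_{n-i-j}$ is a $1$-Gray code for $0^i1^{j+1}\cdot\mathcal{Z}_{n-i-j-1}\cup0^i1^j\cdot\mathcal{Z}_{n-i-j}$ with $\mathrm{first}(\mathbb{L})=0^i1^{j+1}0(001)^\star$ and $\mathrm{last}(\mathbb{L})=0^i1^j(001)^\star$; when $i+j+1=n$, $\mathbb{L}=0^i1^{j+1}\circ0^i1^j0$; (iii) if $3\le i+j<n$, the list $\mathbb{L}=0^i1^j\cdot\mathbb{Z}_{n-i-j}\circ\overline{0^{i-1}1^{j+1}\cdot\mathbb{Z}_{n-i-j}}$ is a $1$-Gray code for $0^i1^j\cdot\mathcal{Z}_{n-i-j}\cup0^{i-1}1^{j+1}\cdot\mathcal{Z}_{n-i-j}$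 with $\mathrm{first}(\mathbb{L})=0^i1^j0(001)^\star$ and $\mathrm{last}(\mathbb{L})=0^{i-1}1^{j+1}0(001)^\star$; when $i+j=n$, $\mathbb{L}=0^i1^j\circ0^{i-1}1^{j+1}$; (iv) if $3\le i+j\le n$, the list $\mathbb{L}=\overline{0^i1^j\cdot\mathbb{Z}_{n-i-j}}\circ0^{i-1}1^{j+1}\cdot\mathbb{Z}_{n-i-j}$ is a $1$-Gray code for $0^i1^j\cdot\mathcal{Z}_{n-i-j}\cup0^{i-1}1^{j+1}\cdot\mathcal{Z}_{n-i-j}$ with $\mathrm{first}(\mathbb{L})=0^i1^j(001)^\star$ and $\mathrm{last}(\mathbb{L})=0^{i-1}1^{j+1}(001)^\star$.
   Context: A binary word is $1$-decreasing if for every maximal run of $0$s, of length $a>0$, together with the (possibly empty) maximal run of $1$s immediately following it, of length $b$, one has $a>b$. For $m\ge1$, $\mathcal{Z}_m$ is the set of $1$-decreasing words of length $m$ starting with $0$; $\mathcal{Z}_0=\{\epsilon\}$. A $1$-Gray code for a set of equal-length words is an ordered list of all its elements, each once, with consecutive words differing in at most one position. For a list $\mathbb{L}$ and a word $w$: $w\cdot\mathbb{L}$ prefixes $w$ to every word of $\mathbb{L}$ (and $w\cdot\mathcal{A}=\{wa:a\in\mathcal{A}\}$ for sets); $\circ$ is list concatenation; $\overline{\mathbb{L}}$ is the reverse list; $\mathrm{first}(\mathbb{L})$, $\mathrm{last}(\mathbb{L})$ are its first and last elements. In a word of prescribed length (here $n$) written $u(001)^\star$, $(001)^\star$ denotes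 the prefix of $001001\cdots$ of the length needed to reach that total length. *)

(* Defs.v *)
From mathcomp Require Import all_boot.
Set Implicit Arguments. Unset Strict Implicit. Unset Printing Implicit Defensive.

(* Binary words: false = 0, true = 1. *)
Definition word := seq bool.

Definition run0 (s : word) : nat := find id s.
Definition run1 (s : word) : nat := find negb s.

(* 1-decreasing: for every maximal run of 0s (starting at position k, i.e.
   w_k = 0 and k = 0 or w_{k-1} = 1), of length a, followed by the (possibly
   empty) maximal run of 1s of length b, one has a > b. *)
Definition one_decreasing (w : word) : Prop :=
  forall k, k < size w -> nth true w k = false ->
    (k = 0 \/ nth true w k.-1 = true) ->
    let s := drop k w in run1 (drop (run0 s) s) < run0 s.

Definition Zset (m : nat) (w : word) : Prop :=
  size w = m /\ (0 < m -> head true w = false) /\ one_decreasing w.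

Definition hamming (v w : word) : nat := count (fun p => p.1 != p.2) (zip v w).

Definition is_gray1 (L : seq word) (S : word -> Prop) : Prop :=
  [/\ uniq L, (forall w, w \in L <-> S w) & sorted (fun v w => hamming v w <= 1) L].

Definition pre_list (u : word) (L : seq word) : seq word := map (cat u) L.
Definition pre_set (u : word) (S : word -> Prop) : word -> Prop :=
  fun w => exists2 z, S z & w = u ++ z.
Definition set_union (S T : word -> Prop) : word -> Prop := fun w => S w \/ T w.

(* prefix of 001001... of length m *)
Definition star001 (m : nat) : word := mkseq (fun k => k %% 3 == 2) m.

Definition zo (a b : nat) : word := nseq a false ++ nseq b true.

Definition first (L : seq word) : word := head [::] L.
Definition lastw (L : seq word) : word := last [::] L.

(* Main.v *)
Require Import Defs.
From mathcomp Require Import all_boot.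

Lemma hamC v w : hamming v w = hamming w v.
Proof.
elim: v w => [|a v IH] [|b w] //; rewrite /hamming /= in IH *.
by rewrite eq_sym IH.
Qed.

Lemma ham_cat u v w : hamming (u ++ v) (u ++ w) = hamming v w.
Proof. by elim: u => //= a u IH; rewrite /hamming /= eqxx add0n. Qed.

Lemma ham_refl s : hamming s s = 0.
Proof. by elim: s => //= a s IH; rewrite /hamming /= eqxx add0n. Qed.

Lemma ham_mid u a b s : hamming (u ++ a :: s) (u ++ b :: s) <= 1.
Proof. by rewrite ham_cat /hamming /= -/(hamming s s) ham_refl addn0; case: (a != b). Qed.

Lemma nth_mid (u : word) a s : nth true (u ++ a :: s) (size u) = a.
Proof. by rewrite nth_cat ltnn subnn. Qed.

Lemma zoS i j s : zo i.+1 j ++ s = nseq i false ++ false :: (nseq j true ++ s).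
Proof. by rewrite /zo -catA; elim: i => //= i ->. Qed.

Lemma zoS' i j s : zo i j.+1 ++ s = zo i j ++ true :: s.
Proof.
rewrite /zo -!catA; congr (_ ++ _).
by elim: j => //= j <-.
Qed.

Lemma size_zo i j : size (zo i j) = i + j.
Proof. by rewrite /zo size_cat !size_nseq. Qed.

Lemma catI (u : word) : injective (cat u).
Proof. by elim: u => //= a u IH x y [] /IH. Qed.

Lemma gray_pre u L S : is_gray1 L S -> is_gray1 (pre_list u L) (pre_set u S).
Proof.
case=> uL mL sL; split.
- by rewrite map_inj_uniq // => x y; exact: catI.
- move=> w; split.
  + by case/mapP=> z zL ->; exists z => //; apply/mL.
  + by case=> z /mL zL ->; apply/mapP; exists z.
- case: L uL mL sL => //= x L _ _; elim: L x => //= y L IH x /andP[h p].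
  by rewrite ham_cat h IH.
Qed.

Lemma gray_rev L S : is_gray1 L S -> is_gray1 (rev L) S.
Proof.
case=> uL mL sL; split.
- by rewrite rev_uniq.
- by move=> w; rewrite mem_rev.
- rewrite rev_sorted; apply: sub_sorted sL => v w /=; by rewrite hamC.
Qed.

Lemma gray_cat L1 L2 S1 S2 : is_gray1 L1 S1 -> is_gray1 L2 S2 ->
  (forall v w, v \in L1 -> w \in L2 -> v != w) ->
  L1 != [::] -> L2 != [::] -> hamming (lastw L1) (first L2) <= 1 ->
  is_gray1 (L1 ++ L2) (set_union S1 S2).
Proof.
case=> u1 m1 s1 [u2 m2 s2] d n1 n2 h; split.
- rewrite cat_uniq u1 u2 /= andbT; apply/hasPn => w w2; apply/negP => w1.
  by move: (d w w w1 w2); rewrite eqxx.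
- move=> w; rewrite mem_cat /set_union; split.
  + by case/orP => [/m1|/m2]; auto.
  + by case=> [/m1|/m2] ->; rewrite ?orbT.
- move: n1 s1 h; case: L1 {u1 m1 d} => // x l1 _; move: n2 s2; case: L2 {u2 m2} => // y l2 _.
  move=> /= p2 p1 h; rewrite /lastw /= in h; by rewrite cat_path p1 /= h p2.
Qed.
From mathcomp Require Import zify.
Lemma first_rev (s : seq word) : first (rev s) = lastw s.
Proof. by case/lastP: s => // s x; rewrite rev_rcons /lastw last_rcons. Qed.

Lemma lastw_rev (s : seq word) : lastw (rev s) = first s.
Proof. by case: s => // x s; rewrite rev_cons /lastw last_rcons. Qed.

Lemma first_cat (s1 s2 : seq word) : s1 != [::] -> first (s1 ++ s2) = first s1.
Proof. by case: s1. Qed.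

Lemma lastw_cat (s1 s2 : seq word) : s2 != [::] -> lastw (s1 ++ s2) = lastw s2.
Proof. by case: s2 => // y s2 _; rewrite /lastw last_cat. Qed.

Lemma lastw_pre u x L : lastw (pre_list u (x :: L)) = u ++ last x L.
Proof. by rewrite /lastw /pre_list /= last_map. Qed.

Lemma pre_cons u x L : pre_list u (x :: L) != [::].
Proof. by []. Qed.

Lemma rev_nn (s : seq word) : s != [::] -> rev s != [::].
Proof. by case/lastP: s => // s x _; rewrite rev_rcons. Qed.

Lemma disj_pos (L1 L2 : seq word) p a b :
  (forall v, v \in L1 -> nth true v p = a) ->
  (forall w, w \in L2 -> nth true w p = b) -> a != b ->
  forall v w, v \in L1 -> w \in L2 -> v != w.
Proof.
move=> h1 h2 ab v w /h1 hv /h2 hw; apply/eqP => e.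
by rewrite -hv -hw e eqxx in ab.
Qed.

Lemma pre_memP u L v : v \in pre_list u L -> exists2 z, z \in L & v = u ++ z.
Proof. by case/mapP=> z zL ->; exists z. Qed.

Theorem lemma3 (n : nat) (Z : nat -> seq word) (i j : nat) :
  1 <= n ->
  Z 0 = [:: [::]] ->
  (forall k, k < n ->
     is_gray1 (Z k) (Zset k) /\
     (0 < k -> first (Z k) = false :: star001 k.-1 /\ lastw (Z k) = star001 k)) ->
  1 <= j -> j < i -> i <= n ->
  (* (i) *)
  ((3 <= i + j < n ->
     let L := pre_list (zo i j) (Z (n - i - j)) in
     [/\ is_gray1 L (pre_set (zo i j) (Zset (n - i - j))),
         first L = zo i j ++ false :: star001 (n - i - j).-1
       & lastw L = zo i j ++ star001 (n - i - j)]) /\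
   (i + j = n -> pre_list (zo i j) (Z (n - i - j)) = [:: zo i j])) /\
  (* (ii) *)
  ((3 <= i + j < n.-1 ->
     let L := pre_list (zo i j.+1) (Z (n - i - j.+1))
                ++ pre_list (zo i j) (Z (n - i - j)) in
     [/\ is_gray1 L (set_union (pre_set (zo i j.+1) (Zset (n - i - j.+1)))
                               (pre_set (zo i j) (Zset (n - i - j)))),
         first L = zo i j.+1 ++ false :: star001 (n - i - j.+1).-1
       & lastw L = zo i j ++ star001 (n - i - j)]) /\
   (i + j + 1 = n ->
     pre_list (zo i j.+1) (Z (n - i - j.+1)) ++ pre_list (zo i j) (Z (n - i - j))
       = [:: zo i j.+1; zo i j ++ [:: false]])) /\
  (* (iii) *)
  ((3 <= i + j < n ->
     let L := pre_list (zo i j) (Z (n - i - j))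
                ++ rev (pre_list (zo i.-1 j.+1) (Z (n - i - j))) in
     [/\ is_gray1 L (set_union (pre_set (zo i j) (Zset (n - i - j)))
                               (pre_set (zo i.-1 j.+1) (Zset (n - i - j)))),
         first L = zo i j ++ false :: star001 (n - i - j).-1
       & lastw L = zo i.-1 j.+1 ++ false :: star001 (n - i - j).-1]) /\
   (i + j = n ->
     pre_list (zo i j) (Z (n - i - j)) ++ rev (pre_list (zo i.-1 j.+1) (Z (n - i - j)))
       = [:: zo i j; zo i.-1 j.+1])) /\
  (* (iv) *)
  (3 <= i + j <= n ->
     let L := rev (pre_list (zo i j) (Z (n - i - j)))
                ++ pre_list (zo i.-1 j.+1) (Z (n - i - j)) in
     [/\ is_gray1 L (set_union (pre_set (zo i j) (Zset (n - i - j)))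
                               (pre_set (zo i.-1 j.+1) (Zset (n - i - j)))),
         first L = zo i j ++ star001 (n - i - j)
       & lastw L = zo i.-1 j.+1 ++ star001 (n - i - j)]).
Proof.
move=> n1 Z0 HZ j1 ji iln.
have dec : forall m, m < n -> exists x L, [/\ Z m = x :: L,
    last x L = star001 m & 0 < m -> x = false :: star001 m.-1].
  move=> m mn; case: m mn => [|m] mn.
    by exists [::], [::]; rewrite Z0.
  have [_ /(_ isT) [f l]] := HZ _ mn.
  move: f l; case: (Z m.+1) => // x L /= -> l.
  by exists (false :: star001 m), L; split.
have gr : forall m, m < n -> is_gray1 (Z m) (Zset m) by move=> m /HZ [].
have wZ : forall m w, 0 < m -> m < n -> w \in Z m -> exists z, w = false :: z.
  move=> m w m0 mn; have [_ /(_ w) H _] := gr m mn.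
  move/H => [sw [hw _]]; move: (hw m0); case: w sw {H hw} => [|a z] /=; first by move=> e; rewrite -e in m0.
  by move=> _ /= ->; exists z.
case: i ji iln => [|i'] // ji iln.
rewrite succnK.
have zoD : forall z z', zo i'.+1 j ++ z != zo i' j.+1 ++ z'.
  move=> z z'; rewrite zoS /zo -catA /=; apply/eqP => e.
  have := congr1 (fun s => nth true s (size (nseq i' false))) e.
  by rewrite !nth_mid.
have gdisj : forall L1 L2 : seq word, (forall v, v \in L1 -> exists z, v = zo i'.+1 j ++ z) ->
    (forall w, w \in L2 -> exists z, w = zo i' j.+1 ++ z) ->
    forall v w, v \in L1 -> w \in L2 -> v != w.
  by move=> L1 L2 h1 h2 v w /h1 [z ->] /h2 [z' ->]; apply: zoD.
have hamD : forall z, hamming (zo i'.+1 j ++ z) (zo i' j.+1 ++ z) <= 1.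
  by move=> z; rewrite zoS /zo -catA; apply: ham_mid.
split; [split|split; [split|split; [split|]]].
- move=> /andP[h3 hn] /=.
  have : 0 < n - i'.+1 - j < n by lia.
  move: (n - i'.+1 - j) => m /andP[m0 mn].
  have [x [L [ZE lx fx]]] := dec m mn.
  split; first by apply: gray_pre; apply: gr.
    by rewrite ZE /= fx.
  by rewrite ZE lastw_pre lx.
- move=> e; have -> : n - i'.+1 - j = 0 by lia.
  by rewrite Z0 /pre_list /= cats0.
- move=> /andP[h3 hn] /=.
  have -> : n - i'.+1 - j.+1 = (n - i'.+1 - j).-1 by lia.
  have : 1 < n - i'.+1 - j < n by lia.
  move: (n - i'.+1 - j) => m /andP[m1 mn].
  have m0 : 0 < m by lia.
  have mn' : m.-1 < n by lia.
  have [x [L [ZE lx fx]]] := dec m mn.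
  have [y [K [ZE' ly fy]]] := dec m.-1 mn'.
  split.
  + apply: gray_cat; [exact/gray_pre/gr | exact/gray_pre/gr | | by rewrite ZE' | by rewrite ZE | ].
    * apply: (@disj_pos _ _ (size (zo i'.+1 j)) true false) => //.
        by move=> v /pre_memP [z _ ->]; rewrite zoS' nth_mid.
      move=> w /pre_memP [z zm ->]; have [z' ->] := wZ m z m0 mn zm.
      by rewrite nth_mid.
    * rewrite ZE ZE' lastw_pre ly /= fx // zoS'; apply: ham_mid.
  + rewrite first_cat ?ZE' //= fy //; lia.
  + by rewrite lastw_cat ZE ?lastw_pre ?lx.
- move=> e; have -> : n - i'.+1 - j.+1 = 0 by lia.
  have -> : n - i'.+1 - j = 1 by lia.
  have h1 : 1 < n by lia.
  have [x [L [ZE lx fx]]] := dec 1 h1.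
  have x1 := fx isT; rewrite /= in x1.
  case: L ZE lx => [|w L] ZE _; first by rewrite Z0 ZE x1 /pre_list /= cats0.
  exfalso.
  have [u /(_ w) [H _] _] := gr 1 h1.
  have wm : w \in Z 1 by rewrite ZE in_cons mem_head orbT.
  move/H: wm => [sw [hw _]].
  move: (hw isT) u; rewrite ZE /= x1.
  by case: w sw {H hw ZE} => [|a [|b z]] //= _ ->; rewrite mem_head.
- move=> /andP[h3 hn] /=.
  have : 0 < n - i'.+1 - j < n by lia.
  move: (n - i'.+1 - j) => m /andP[m0 mn].
  have [x [L [ZE lx fx]]] := dec m mn.
  split.
  + apply: gray_cat; [exact/gray_pre/gr | exact/gray_rev/gray_pre/gr | | by rewrite ZE | by rewrite ZE rev_nn | ].
    * apply: gdisj => [v /pre_memP [z _ ->]|w]; first by exists z.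
      by rewrite mem_rev => /pre_memP [z _ ->]; exists z.
    * rewrite first_rev ZE !lastw_pre lx; apply: hamD.
  + by rewrite first_cat ZE // /= fx.
  + by rewrite lastw_cat ?ZE ?rev_nn // lastw_rev /= fx.
- move=> e; have -> : n - i'.+1 - j = 0 by lia.
  by rewrite Z0 /pre_list /= !cats0.
- move=> /andP[h3 hn] /=.
  have : n - i'.+1 - j < n by lia.
  move: (n - i'.+1 - j) => m mn.
  have [x [L [ZE lx fx]]] := dec m mn.
  split.
  + apply: gray_cat; [exact/gray_rev/gray_pre/gr | exact/gray_pre/gr | | by rewrite ZE rev_nn | by rewrite ZE | ].
    * apply: gdisj => [v|w /pre_memP [z _ ->]]; last by exists z.
      by rewrite mem_rev => /pre_memP [z _ ->]; exists z.
    * rewrite lastw_rev ZE /=; apply: hamD.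
  + by rewrite first_cat ?ZE ?rev_nn // first_rev lastw_pre lx.
  + by rewrite lastw_cat ?ZE // lastw_pre lx.
Qed.
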